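(* Define $a_n\langle B_n\rangle$, $n\ge0$, by \[ \sum_{n=0}^{\infty}\frac{a_n\langle B_n\rangle}{n!}\alpha^n=\frac{1}{1-\alpha}\exp\!\Big(\frac{1}{1-\alpha}-1\Big). \] Then for every $n\ge0$, \[ a_n\langle B_n\rangle=\sum_{k=0}^{n}|s(n,k)|\,B_{k+1}, \] where $B_m$ is the $m$-th Bell number and $|s(n,k)|$ is the unsigned Stirling number of the first kind.
   Context: $B_m$ is the number of partitions of an $m$-element set ($B_0=1,B_1=1,B_2=2,B_3=5,\dots$). $|s(n,k)|$ is the number of permutations of $n$ elements with exactly $k$ disjoint cycles, with $|s(0,0)|=1$ and $|s(n,0)|=0$ for $n\ge1$. *)

(* Defs.v *)
From mathcomp Require Import all_boot all_order all_algebra all_fingroup.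
Set Implicit Arguments. Unset Strict Implicit. Unset Printing Implicit Defensive.
Import GRing.Theory Num.Theory.
Local Open Scope ring_scope.

Definition fps := nat -> rat.

Definition fps_mul (f g : fps) : fps :=
  fun n => \sum_(i < n.+1) f i * g (n - i)%N.

Fixpoint fps_pow (f : fps) (j : nat) : fps :=
  match j with
  | O => fun n => if n == 0%N then 1 else 0
  | S j' => fps_mul f (fps_pow f j')
  end.

(* exp(f) = sum_{j>=0} f^j / j!, for f with zero constant term.  Since f^j
   has order >= j in that case, the coefficient of alpha^n only receives
   contributions from j <= n, so the formal sum is computed exactly by the
   truncation below. *)
Definition fps_exp (f : fps) : fps :=
  fun n => \sum_(j < n.+1) fps_pow f j n / (j`!)%:R.

Definition geom : fps := fun _ => 1.

(* 1/(1-alpha) - 1 *)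
Definition geom_m1 : fps := fun n => if n == 0%N then 0 else 1.

Definition aB (n : nat) : rat := (n`!)%:R * fps_mul geom (fps_exp geom_m1) n.

Definition bell (m : nat) : nat :=
  #|[set P : {set {set 'I_m}} | partition P [set: 'I_m]]|.

(* Unsigned Stirling number of the first kind: number of permutations of
   n elements with exactly k disjoint cycles (fixed points count as cycles). *)
Definition stirling1 (n k : nat) : nat :=
  #|[set s : 'S_n | #|porbits s| == k]|.

(* Main.v *)
Require Import Defs.
From mathcomp Require Import all_boot all_order all_algebra all_fingroup.
From mathcomp Require Import zify ring lra.
Set Implicit Arguments. Unset Strict Implicit. Unset Printing Implicit Defensive.
Import GRing.Theory Num.Theory.
Section P1.
Local Open Scope ring_scope.

Section Stir.
Variable n : nat.
Definition ext (s : 'S_n) : 'S_n.+1 := lift_perm ord_max ord_max s.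
Definition psi (p : 'I_n.+1 * 'S_n) : 'S_n.+1 := tperm p.1 ord_max * ext p.2.

Lemma ext_max s : ext s ord_max = ord_max.
Proof. exact: lift_perm_id. Qed.
Lemma ext_lift s x : ext s (lift ord_max x) = lift ord_max (s x).
Proof. exact: lift_perm_lift. Qed.
Lemma ext_expg s k : ((ext s) ^+ k = ext (s ^+ k))%g.
Proof.
elim: k => [|k IH]; first by rewrite !expg0 /ext lift_perm1.
by rewrite !expgS IH /ext lift_permM.
Qed.

Lemma ext_inj : injective ext.
Proof.
move=> s t E; apply/permP => x; apply: (@lift_inj _ ord_max).
by rewrite -!ext_lift E.
Qed.

Lemma porbit_ext_max s : porbit (ext s) ord_max = [set ord_max].
Proof.
apply/setP => y; rewrite inE; apply/porbitP/eqP => [[k ->]|->].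
  by rewrite ext_expg ext_max.
by exists 0%N; rewrite expg0 perm1.
Qed.

Lemma porbit_ext_lift s x :
  porbit (ext s) (lift ord_max x) = lift ord_max @: porbit s x.
Proof.
apply/setP => y; apply/porbitP/imsetP => [[k ->]|[z /porbitP [k ->] ->]].
  by exists ((s ^+ k)%g x); [exact: mem_porbit | rewrite ext_expg ext_lift].
by exists k; rewrite ext_expg ext_lift.
Qed.

Lemma porbits_ext s : porbits (ext s) =
  [set ord_max] |: (fun A : {set 'I_n} => lift ord_max @: A) @: porbits s.
Proof.
apply/setP => A; rewrite !inE; apply/imsetP/idP => [[y _ ->]|].
  case: (unliftP ord_max y) => [x ->|->].
    by rewrite porbit_ext_lift imset_f ?orbT // imset_f.
  by rewrite porbit_ext_max eqxx.
case/orP => [/eqP ->|/imsetP [B /imsetP [x _ ->] ->]].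
  by exists ord_max; rewrite // porbit_ext_max.
by exists (lift ord_max x); rewrite // porbit_ext_lift.
Qed.

Lemma card_porbits_ext s : #|porbits (ext s)| = #|porbits s|.+1.
Proof.
rewrite porbits_ext cardsU1 card_imset; last first.
  by apply: imset_inj; exact: lift_inj.
case: (boolP (_ \in _)) => // /imsetP [B _ E].
have : (ord_max : 'I_n.+1) \in [set ord_max] by rewrite set11.
rewrite E => /imsetP [z _ /eqP]; by rewrite (negbTE (neq_lift _ _)).
Qed.

Lemma card_psi i s :
  #|porbits (psi (i, s))| = (#|porbits s| + (i == ord_max))%N.
Proof.
rewrite /psi /=; have := porbits_mul_tperm (ext s) i ord_max.
rewrite card_porbits_ext porbit_ext_max.
rewrite /= in_set1.
case: eqP => [->|_] /=; first by rewrite tperm1 mul1g card_porbits_ext addn1.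
by move=> /= H; rewrite addn0; apply/eqP; rewrite -(eqn_add2r 2) H addSn addnS addn0 addn2 eqxx //.
Qed.

Lemma psi_inj : injective psi.
Proof.
move=> [i s] [j t]; rewrite /psi /= => E.
have Hi : ((tperm j ord_max * ext t)%g i = ord_max).
  by rewrite -E permM tpermL ext_max.
have eij : i = j.
  move: Hi; rewrite permM; case: tpermP => //.
    move=> -> H; apply: (@perm_inj _ (ext t)); by rewrite H ext_max.
  move=> _ ne H; case: ne; apply: (@perm_inj _ (ext t)); by rewrite H ext_max.
subst j; congr (_, _); apply: ext_inj; exact: (mulgI (tperm i ord_max)) E.
Qed.
End Stir.
Definition rising n : {poly rat} := \prod_(i < n) ('X + i%:R).

Lemma psi_bij n : bijective (@psi n).
Proof.
apply: inj_card_bij; first exact: psi_inj.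
by rewrite card_prod !card_Sn card_ord factS.
Qed.

Lemma sum_porbits n : \sum_(s : 'S_n) 'X^(#|porbits s|) = rising n.
Proof.
elim: n => [|n IH].
  rewrite /rising big_ord0 (eq_bigr (fun _ => 1)) ?sumr_const ?card_Sn //.
  move=> s _; rewrite /porbits.
  suff -> : #|porbit s @: 'I_0| = 0%N by rewrite expr0.
  by apply/eqP; rewrite cards_eq0 -subset0; apply/subsetP => A /imsetP [[]].
rewrite (reindex (@psi n)) /=; last by apply: onW_bij; exact: psi_bij.
rewrite -(pair_big xpredT xpredT (fun i s => 'X^(#|porbits (psi (i, s))|))) /=.
rewrite exchange_big /= /rising big_ord_recr /= -/(rising n) -IH big_distrl /=.
apply: eq_bigr => s _; rewrite big_ord_recr /=.
rewrite (eq_bigr (fun _ => 'X^(#|porbits s|))); last first.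
  move=> i _; rewrite card_psi.
  by rewrite (_ : (widen_ord _ i == ord_max) = false) ?addn0 //; apply/negbTE; rewrite neq_ltn /= ltn_ord.
rewrite card_psi eqxx addn1 sumr_const card_ord exprS mulrDr addrC.
by rewrite mulr_natr (mulrC (GRing.exp _ _)) addrC.
Qed.
End P1.

Section Part.
Variable T : finType.
Definition pc (D : {set T}) := #|[set P : {set {set T}} | partition P D]|.

Lemma pc_set0 : pc set0 = 1%N.
Proof.
rewrite /pc (_ : [set P | _] = [set set0]) ?cards1 //.
by apply/setP => P; rewrite !inE partition_set0.
Qed.

Lemma setUDK (B D : {set T}) : B \subset D -> B :|: (D :\: B) = D.
Proof.
move=> /subsetP BD; apply/setP => y; rewrite !inE.
by case: (boolP (y \in B)) => //= /BD ->.
Qed.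

Lemma pc_block (x : T) (B D : {set T}) : x \in B -> B \subset D ->
  #|[set P | partition P D & pblock P x == B]| = pc (D :\: B).
Proof.
move=> xB BD.
have BnQ Q : partition Q (D :\: B) -> B \notin Q.
  move=> pQ; apply/negP => BQ; have := partitionS pQ BQ.
  by move/subsetP/(_ x xB); rewrite inE xB.
rewrite /pc -(card_in_imset (f := fun Q => B |: Q) (D := [set Q | partition Q (D :\: B)])); last first.
  move=> Q1 Q2; rewrite !inE => p1 p2 E.
  by rewrite -(setU1K (BnQ _ p1)) -(setU1K (BnQ _ p2)) E.
apply: eq_card => P; rewrite inE; apply/andP/imsetP.
  move=> [pP /eqP pb].
  have BP : B \in P.
    rewrite -pb; apply: pblock_mem; rewrite (cover_partition pP).
    exact: (subsetP BD).
  exists (P :\ B); last by rewrite setD1K.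
  by rewrite inE; apply: partitionD1.
move=> [Q]; rewrite inE => pQ ->; split.
  rewrite -{1}(setUDK BD); apply: partitionU1 => //.
    by apply/set0Pn; exists x.
  by rewrite disjoints_subset; apply/subsetP => y; rewrite !inE => ->.
apply/eqP; apply: def_pblock => //; last by rewrite setU11.
have : partition (B |: Q) (B :|: (D :\: B)).
  apply: partitionU1 => //; first by apply/set0Pn; exists x.
  by rewrite disjoints_subset; apply/subsetP => y; rewrite !inE => ->.
exact: partition_trivIset.
Qed.

Lemma pc_rec (x : T) (D : {set T}) : x \in D ->
  pc D = (\sum_(A : {set T} | A \subset D :\ x) pc ((D :\ x) :\: A))%N.
Proof.
move=> xD.
rewrite /pc -sum1_card.
rewrite (partition_big (fun P => pblock P x :\ x) (fun A => A \subset D :\ x)) /=; last first.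
  move=> P; rewrite inE => pP; apply: setSD.
  apply: (partitionS pP); apply: pblock_mem; by rewrite (cover_partition pP).
apply: eq_bigr => A AD.
have xA : x \notin A by apply/negP => /(subsetP AD); rewrite !inE eqxx.
rewrite -/(pc _) setDDl -(pc_block (x := x)); first last.
- by apply/subsetP => y; rewrite !inE => /orP [/eqP ->//|/(subsetP AD)]; rewrite !inE => /andP [].
- by rewrite !inE eqxx.
rewrite -sum1_card; apply: eq_bigl => P; rewrite !inE.
case: (boolP (partition P D)) => //= pP.
have xp : x \in pblock P x by rewrite mem_pblock (cover_partition pP).
apply/eqP/eqP => E.
  by rewrite -E setD1K.
by rewrite E setU1K.
Qed.
End Part.
Lemma bell_pc m : bell m = pc [set: 'I_m].
Proof. by []. Qed.

Lemma sum_subsets (T : finType) (E : {set T}) m (F : nat -> nat) : #|E| = m ->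
  (\sum_(A : {set T} | A \subset E) F #|A| = \sum_(k < m.+1) 'C(m, k) * F k)%N.
Proof.
move=> HE.
rewrite (partition_big (fun A : {set T} => (inord #|A| : 'I_m.+1)) xpredT) //=.
apply: eq_bigr => k _.
rewrite (eq_bigr (fun _ => F k)); last first.
  move=> A /andP [AE /eqP <-]; rewrite inordK // ltnS -HE; exact: subset_leq_card.
rewrite sum_nat_const; congr (_ * _)%N.
have -> : 'C(m, k) = 'C(#|E|, k) by rewrite HE.
rewrite -cards_draws; apply: eq_card => A; rewrite unfold_in !inE /=.
case: (boolP (A \subset E)) => //= AE.
have hA : (#|A| < m.+1)%N by rewrite ltnS -HE; exact: subset_leq_card.
apply/eqP/eqP => E0.
  by rewrite -E0 inordK.
by apply: val_inj; rewrite /= inordK // E0.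
Qed.

Lemma bell_rec_aux m :
  (forall k, (k <= m)%N -> forall (T : finType) (E : {set T}), #|E| = k -> pc E = bell k) ->
  forall (T : finType) (D : {set T}), #|D| = m.+1 ->
  pc D = (\sum_(k < m.+1) 'C(m, k) * bell (m - k))%N.
Proof.
move=> IH T D HD.
have [x xD] : exists x, x \in D.
  by apply/set0Pn; rewrite -card_gt0 HD.
have HDx : #|D :\ x| = m by move: HD; rewrite (cardsD1 x) xD add1n => -[].
rewrite (pc_rec xD).
rewrite (eq_bigr (fun A : {set T} => bell (m - #|A|))); last first.
  move=> A AD; apply: IH; first exact: leq_subr.
  by rewrite cardsDS // HDx.
by rewrite (sum_subsets (fun k => bell (m - k)) HDx).
Qed.

Lemma pc_bell : forall m (T : finType) (D : {set T}), #|D| = m -> pc D = bell m.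
Proof.
move=> m0; elim: m0.+1 {-2}m0 (ltnSn m0) => // N IH [|m] lt T D HD.
  rewrite (_ : D = set0); last by apply/eqP; rewrite -cards_eq0 HD.
  rewrite pc_set0 bell_pc (_ : [set: 'I_0] = set0) ?pc_set0 //.
  by apply/eqP; rewrite -cards_eq0 cardsT card_ord.
have IH' : forall k, (k <= m)%N -> forall (T : finType) (E : {set T}), #|E| = k -> pc E = bell k.
  move=> k km T' E HE; apply: (IH k) => //; lia.
rewrite (bell_rec_aux IH' HD) bell_pc (bell_rec_aux IH') //.
by rewrite cardsT card_ord.
Qed.

Lemma bell_rec m : bell m.+1 = (\sum_(k < m.+1) 'C(m, k) * bell k)%N.
Proof.
have IH' : forall k, (k <= m)%N -> forall (T : finType) (E : {set T}), #|E| = k -> pc E = bell k.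
  by move=> k _ T E HE; apply: pc_bell.
rewrite bell_pc (bell_rec_aux IH') ?cardsT ?card_ord //.
rewrite (reindex_inj rev_ord_inj) /=.
apply: eq_bigr => k _; rewrite subSS bin_sub ?subKn ?leq_subr //; by rewrite -ltnS.
Qed.
Section P3.
Local Open Scope ring_scope.

Definition Lf (p : {poly rat}) : rat := \sum_(i < size p) p`_i * (bell i)%:R.

Lemma sum_widen (F : nat -> rat) m N : (m <= N)%N ->
  (forall j, (m <= j)%N -> (j < N)%N -> F j = 0) ->
  \sum_(j < m) F j = \sum_(j < N) F j.
Proof.
move=> mN H; rewrite (big_ord_widen N F mN) big_mkcond /=.
apply: eq_bigr => j _; case: ifP => // /negbT; rewrite -leqNgt => mj.
by rewrite H.
Qed.

Lemma Lf_bound N (p : {poly rat}) : (size p <= N)%N -> Lf p = \sum_(i < N) p`_i * (bell i)%:R.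
Proof.
move=> sN; rewrite /Lf (@sum_widen (fun i => p`_i * (bell i)%:R) _ _ sN) //.
by move=> j sj _; rewrite nth_default // mul0r.
Qed.

Lemma LfD (p q : {poly rat}) : Lf (p + q) = Lf p + Lf q.
Proof.
set N := maxn (size p) (size q).
rewrite (@Lf_bound N (p + q)); last by rewrite (leq_trans (size_polyD _ _)).
rewrite (@Lf_bound N p) ?leq_maxl // (@Lf_bound N q) ?leq_maxr //.
by rewrite -big_split; apply: eq_bigr => i _; rewrite coefD mulrDl.
Qed.

Lemma LfZ (c : rat) (p : {poly rat}) : Lf (c *: p) = c * Lf p.
Proof.
rewrite (@Lf_bound (size p) (c *: p)) ?size_scale_leq // /Lf mulr_sumr.
by apply: eq_bigr => i _; rewrite coefZ mulrA.
Qed.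

Lemma Lf0 : Lf 0 = 0.
Proof. by rewrite /Lf size_poly0 big_ord0. Qed.

Lemma Lf_sum (I : finType) (F : I -> {poly rat}) : Lf (\sum_i F i) = \sum_i Lf (F i).
Proof. exact: (big_morph Lf LfD Lf0). Qed.

Lemma LfXn m : Lf 'X^m = (bell m)%:R.
Proof.
rewrite /Lf size_polyXn big_ord_recr /= big1 ?add0r ?coefXn ?eqxx ?mul1r //.
by move=> i _; rewrite coefXn (ltn_eqF (ltn_ord i)) /= mul0r.
Qed.

Lemma Lf_shift (p : {poly rat}) : Lf ('X * p) = Lf (p \Po ('X + 1)).
Proof.
rewrite comp_polyE -{1}[p]comp_polyXr comp_polyE mulr_sumr.
rewrite !Lf_sum; apply: eq_bigr => i _.
rewrite -scalerAr !LfZ; congr (_ * _).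
rewrite -exprS LfXn exprD1n Lf_sum.
rewrite bell_rec natr_sum; apply: eq_bigr => k _.
by rewrite -scaler_nat LfZ LfXn natrM.
Qed.

Definition fall j : {poly rat} := \prod_(i < j) ('X - i%:R).

Lemma natr_comp (k : nat) (q : {poly rat}) : (k%:R : {poly rat}) \Po q = k%:R.
Proof. by rewrite -polyC_natr comp_polyC. Qed.

Lemma fallS j : fall j.+1 = 'X * (fall j \Po ('X - 1)).
Proof.
elim: j => [|j IH].
  by rewrite /fall big_ord_recr !big_ord0 /= -polyC1 comp_polyC subr0 mul1r mulr1.
rewrite [in RHS]/fall big_ord_recr /= -/(fall j) comp_polyM comp_polyB comp_polyX natr_comp.
rewrite /fall big_ord_recr /= -/(fall j.+1) IH.
rewrite -addn1 natrD; ring.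
Qed.

Lemma bell0 : bell 0 = 1%N.
Proof.
rewrite bell_pc (_ : [set: 'I_0] = set0) ?pc_set0 //.
by apply/eqP; rewrite -cards_eq0 cardsT card_ord.
Qed.

Lemma Lf_fall j : Lf (fall j) = 1.
Proof.
elim: j => [|j IH].
  by rewrite /fall big_ord0 (_ : 1 = 'X^0) ?LfXn ?bell0 ?expr0.
rewrite fallS Lf_shift -comp_polyA comp_polyB comp_polyX -polyC1 comp_polyC polyC1.
by rewrite addrK comp_polyXr.
Qed.

Definition coefc n j : rat := (n`!)%:R * ('C(n, j))%:R / (j`!)%:R.

Lemma bin_id n j : ((n.+1) * 'C(n.+1, j.+1) = j.+1 * 'C(n, j) + (n.+2 + j) * 'C(n, j.+1))%N.
Proof.
have H := mul_bin_left n j.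
rewrite binS.
case: (leqP j n) => jn.
  nia.
rewrite !bin_small //; lia.
Qed.

Lemma coefcS n j : coefc n.+1 j =
  (if j is j'.+1 then coefc n j' else 0) + coefc n j * (n.+1 + j)%:R.
Proof.
case: j => [|j].
  rewrite /coefc !bin0 add0r addn0 (factS n) natrM; ring.
rewrite /coefc (factS n) (factS j) !natrM.
have H := bin_id n j.
have fj : (j`!)%:R != 0 :> rat by rewrite pnatr_eq0 -lt0n fact_gt0.
have fj1 : (j.+1)%:R != 0 :> rat by rewrite pnatr_eq0.
have H' : (n.+1)%:R * ('C(n.+1, j.+1))%:R = (j.+1)%:R * ('C(n, j))%:R + (n.+2 + j)%:R * ('C(n, j.+1))%:R :> rat.
  by rewrite -!natrM -natrD H.
rewrite -addSnnS.
apply: (@mulIf _ ((j.+1)%:R * (j`!)%:R)); first by rewrite mulf_neq0.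
rewrite mulrDl.
have E1 : (n.+1)%:R * (n`!)%:R * ('C(n.+1, j.+1))%:R / ((j.+1)%:R * (j`!)%:R) * ((j.+1)%:R * (j`!)%:R)
   = (n`!)%:R * ((n.+1)%:R * ('C(n.+1, j.+1))%:R) :> rat.
  by rewrite divfK ?mulf_neq0 //; ring.
rewrite E1 H'; field; rewrite fj /=.
by move: fj1; rewrite -addn1 natrD addrC.
Qed.

Lemma fall_mul j n : fall j * ('X + 1 + n%:R) = fall j.+1 + fall j * (n.+1 + j)%:R.
Proof.
rewrite {2}/fall big_ord_recr /= -/(fall j) -mulrDr; congr (_ * _).
rewrite natrD -addn1 natrD; ring.
Qed.

Lemma Q_expand n : rising n \Po ('X + 1) = \sum_(j < n.+1) coefc n j *: fall j.
Proof.
elim: n => [|n IH].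
  rewrite /rising big_ord0 -polyC1 comp_polyC polyC1 big_ord1 /coefc /fall big_ord0.
  by rewrite /= mulr1 divr1 scale1r.
rewrite /rising big_ord_recr /= -/(rising n) comp_polyM IH comp_polyD comp_polyX natr_comp.
rewrite mulr_suml.
rewrite (eq_bigr (fun j : 'I_n.+1 => coefc n j *: fall j.+1 + (coefc n j * (n.+1 + j)%:R) *: fall j)); last first.
  move=> j _; rewrite -scalerAl fall_mul scalerDr -scalerA scaler_nat mulr_natr //.
rewrite big_split /=.
rewrite (eq_bigr (fun j : 'I_n.+2 => (if (j : nat) is j'.+1 then coefc n j' else 0) *: fall j
   + (coefc n j * (n.+1 + j)%:R) *: fall j)); last first.
  by move=> j _; rewrite coefcS scalerDl.
rewrite big_split /=; congr (_ + _).
  rewrite [in RHS]big_ord_recl /= scale0r add0r.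
  by apply: eq_bigr => i _; rewrite /bump leq0n add1n.
rewrite [in RHS]big_ord_recr /=. rewrite /coefc (@bin_small n n.+1) // mulr0 !mul0r scale0r addr0 //.
Qed.

Lemma porbits_bound n (s : 'S_n) : (#|porbits s| < n.+1)%N.
Proof.
rewrite ltnS /porbits; apply: leq_trans (leq_imset_card _ _) _.
by rewrite card_ord.
Qed.

Lemma stir_poly n : rising n = \sum_(k < n.+1) (stirling1 n k)%:R *: 'X^k.
Proof.
rewrite -sum_porbits.
rewrite (partition_big (fun s : 'S_n => (inord #|porbits s| : 'I_n.+1)) xpredT) //=.
apply: eq_bigr => k _.
rewrite (eq_bigr (fun _ => 'X^k)); last first.
  by move=> s /eqP <-; rewrite inordK // porbits_bound.
rewrite sumr_const scaler_nat; congr (_ *+ _).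
rewrite /stirling1; apply: eq_card => s; rewrite unfold_in !inE /=.
apply/eqP/eqP => E0.
  by rewrite -E0 inordK // porbits_bound.
by rewrite E0 inord_val.
Qed.

Lemma rhs_eq n : ((\sum_(k < n.+1) stirling1 n k * bell k.+1)%N)%:R = \sum_(j < n.+1) coefc n j.
Proof.
have -> : \sum_(j < n.+1) coefc n j = Lf (rising n \Po ('X + 1)).
  rewrite Q_expand Lf_sum; apply: eq_bigr => j _; by rewrite LfZ Lf_fall mulr1.
rewrite -Lf_shift stir_poly mulr_sumr Lf_sum natr_sum; apply: eq_bigr => k _.
by rewrite -scalerAr -exprS LfZ LfXn natrM.
Qed.

Definition compn (m j : nat) : nat :=
  if j is j'.+1 then (if m is m'.+1 then 'C(m', j') else 0%N) else (m == 0%N).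

Lemma sum_compn m j : (\sum_(t < m) compn t j)%N = compn m j.+1.
Proof.
elim: m => [|m IH]; first by rewrite big_ord0; case: j.
rewrite big_ord_recr /= IH; clear IH.
case: j => [|j].
  by case: m => [|m] /=; rewrite ?bin0 ?addn0.
case: m => [|m] /=; first by rewrite bin0n.
by rewrite binS addnC.
Qed.

Lemma rev_sum (F : nat -> rat) m : \sum_(i < m) F (m - i.+1)%N = \sum_(i < m) F i.
Proof.
rewrite (reindex_inj rev_ord_inj) /=; apply: eq_bigr => i _; congr F.
have := ltn_ord i; lia.
Qed.

Lemma fps_pow_gm1 j m : fps_pow geom_m1 j m = (compn m j)%:R.
Proof.
elim: j m => [|j IH] m.
  by rewrite /= /compn; case: (m == 0%N).
rewrite /= /fps_mul big_ord_recl /= {1}/geom_m1 /= mul0r add0r.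
rewrite (eq_bigr (fun i : 'I_m => ((compn (m - i.+1) j)%:R : rat))); last first.
  by move=> i _; rewrite /geom_m1 /bump leq0n add1n /= mul1r IH.
have -> : \sum_(i < m) ((compn (m - i.+1) j)%:R : rat) = \sum_(i < m) (compn i j)%:R.
  exact: (rev_sum (fun t => ((compn t j)%:R : rat)) m).
by rewrite -natr_sum sum_compn.
Qed.

Lemma aB_eq n : aB n = \sum_(j < n.+1) coefc n j.
Proof.
rewrite /aB /fps_mul /geom.
rewrite (eq_bigr (fun i : 'I_n.+1 => fps_exp geom_m1 (n.+1 - i.+1)%N)); last first.
  by move=> i _; rewrite mul1r subSS.
have := rev_sum (fun t => fps_exp geom_m1 t) n.+1; rewrite /= => ->; rewrite /fps_exp.
rewrite (eq_bigr (fun m : 'I_n.+1 => \sum_(j < n.+1) ((compn m j)%:R / (j`!)%:R : rat))); last first.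
  move=> m _.
  transitivity (\sum_(j < m.+1) ((compn m j)%:R / (j`!)%:R : rat)).
    by apply: eq_bigr => j _; rewrite fps_pow_gm1.
  apply: (@sum_widen (fun j => ((compn m j)%:R / (j`!)%:R : rat)) m.+1 n.+1) => //.
  move=> j mj _; case: j mj => [|j] // mj.
  move: (nat_of_ord m) mj => k; case: k => [|k] mj /=; first by rewrite mul0r.
  by rewrite bin_small ?mul0r.
rewrite exchange_big mulr_sumr; apply: eq_bigr => j _.
rewrite -mulr_suml -natr_sum sum_compn /coefc /= mulrA //.
Qed.
End P3.

Theorem mainTheorem20 (n : nat) :
  aB n = (((\sum_(k < n.+1) stirling1 n k * bell k.+1)%N)%:R)%R.
Proof.
by rewrite aB_eq rhs_eq.
Qed.
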